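(* The dominating cooperative game mapping $\omega$ is weakly chain-rule decomposable and importance inducing.
   Context: $X$ is a fixed finite set of $n=|X|$ variables. An assignment over $U\subseteq X$ is a map $\mathbf u:U\to\{0,1\}$; $\mathbf u;\mathbf v$ is concatenation of assignments with disjoint domains, $\mathbf u_S$ is restriction. For $S\subseteq X$ and $\mathbf u$ over $X$, $\mathbf u^{\oplus S}$ flips the values of the variables in $S$. $\mathbb B(X)$ is the set of Boolean functions $\{0,1\}^X\to\{0,1\}$, combined pointwise by $\lor,\land$ (juxtaposition), $\oplus$, negation $\overline f$; a variable $x$ also denotes $\mathbf u\mapsto\mathbf u(x)$; $f\ge g$ is pointwise. Cofactor: $f_{\mathbf v}(\mathbf u)=f(\mathbf v;\mathbf u_{X\setminus V})$ for $\mathbf v$ over $V$; $f_{x/c}$ for $V=\{x\}$. $\mathrm{dep}(f)=\{x: f_{x/1}\ne f_{x/0}\}$; $f$ is monotone in $x$ if $f_{x/1}\ge f_{x/0}$. $f^{\oplus y}(\mathbf u)=f(\mathbf u^{\oplus\{y\}})$. For a permutation $\sigma$ of $X$: $(\sigma\mathbf u)(x)=\mathbf u(\sigma^{-1}(x))$, $(\sigma f)(\mathbf u)=f(\sigma^{-1}\mathbf u)$. $f[x/s]=s f_{x/1}\lor\overline s f_{x/0}$. Modularity: $f$ is modular in $g$ if $g$ is not constant and there are $\ell\in\mathbb B(X)$, $z\in X$ with $\mathrm{dep}(\ell)\cap\mathrm{dep}(g)=\emptyset$ and $f=\ell[z/g]$; monotonically modular if moreover $\ell$ is monotone in $z$.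 Then $f_{g/1}:=\ell_{z/1}$, $f_{g/0}:=\ell_{z/0}$ (well defined), and for a variable $w$, $f[g/w]:=w f_{g/1}\lor\overline w f_{g/0}$. Cooperative games: $v:2^X\to\mathbb R$, combined and compared pointwise; $\partial_xv(S)=v(S\cup\{x\})-v(S\setminus\{x\})$. A cooperative game mapping (CGM) is $\tau:\mathbb B(X)\to(2^X\to\mathbb R)$, $f\mapsto\tau_f$. It is importance inducing if for all $x,y\in X$, permutations $\sigma$ and $f,g,h$: (Bound$_{CG}$) $0\le\partial_x\tau_f\le1$; (Dum$_{CG}$) $\partial_x\tau_f=0$ if $x\notin\mathrm{dep}(f)$; (Dic$_{CG}$) $\partial_x\tau_x=\partial_x\tau_{\overline x}=1$; (Type$_{CG}$) $\tau_f(S)=\tau_{\sigma f}(\sigma(S))$ and $\tau_f(S)=\tau_{f^{\oplus y}}(S)$ for all $S$; (ModEC$_{CG}$) $\partial_x\tau_f\ge\partial_x\tau_h$ whenever $f,h$ are monotonically modular in $g$, $f_{g/1}\ge h_{g/1}$, $h_{g/0}\ge f_{g/0}$, $x\in\mathrm{dep}(g)$. $\tau$ is weakly chain-rule decomposable if for all $f$ monotonically modular in $g$ and $x\in\mathrm{dep}(g)$: $\partial_x\tau_f=(\partial_x\tau_g)(\partial_{x_g}\tau_{f[g/x_g]})$ for a variable $x_g\notin\mathrm{dep}(f)$. The dominating CGM is $\omega_f(S)=1$ if there is $\mathbf u\in\{0,1\}^S$ such that $f(\mathbf u;\mathbf w)=1$ for all $\mathbf w\in\{0,1\}^{X\setminus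 S}$, and $\omega_f(S)=0$ otherwise. *)

(* Defs.v *)
From HB Require Import structures.
From mathcomp Require Import all_boot all_order all_algebra all_fingroup.
Set Implicit Arguments. Unset Strict Implicit. Unset Printing Implicit Defensive.
Import Order.TTheory GRing.Theory Num.Theory.
Local Open Scope ring_scope.

Section Defs.
Variable X : finType.

(* Full assignments over X; assignments over a subset U are represented by
   full assignments of which only the values on U matter. *)
Definition assign := {ffun X -> bool}.

Definition boolfun := assign -> bool.

Definition concat (V : {set X}) (v u : assign) : assign :=
  [ffun x => if x \in V then v x else u x].

Definition upd (u : assign) (x : X) (c : bool) : assign :=
  [ffun y => if y == x then c else u y].

Definition cof (f : boolfun) (x : X) (c : bool) : boolfun :=
  fun u => f (upd u x c).

Definition dep (f : boolfun) (x : X) : Prop := cof f x true <> cof f x false.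

Definition fle (g f : boolfun) : Prop := forall u, g u -> f u.

Definition monotone_in (f : boolfun) (x : X) : Prop :=
  fle (cof f x false) (cof f x true).

Definition varf (x : X) : boolfun := fun u => u x.
Definition negf (f : boolfun) : boolfun := fun u => ~~ f u.

Definition flip (y : X) (u : assign) : assign :=
  [ffun x => if x == y then ~~ u x else u x].
Definition flipf (f : boolfun) (y : X) : boolfun := fun u => f (flip y u).

Definition permA (s : {perm X}) (u : assign) : assign :=
  [ffun x => u ((s^-1)%g x)].
Definition permF (s : {perm X}) (f : boolfun) : boolfun :=
  fun u => f (permA (s^-1)%g u).

Definition subst (f : boolfun) (x : X) (s : boolfun) : boolfun :=
  fun u => (s u && cof f x true u) || (~~ s u && cof f x false u).

Definition nonconstant (g : boolfun) : Prop := exists u v, g u <> g v.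

(* (l, z) witnesses that f is modular in g: f = l[z/g] *)
Definition modular_wit (f g l : boolfun) (z : X) : Prop :=
  nonconstant g /\ (forall x, ~ (dep l x /\ dep g x)) /\ f = subst l z g.

Definition mmodular_wit (f g l : boolfun) (z : X) : Prop :=
  modular_wit f g l z /\ monotone_in l z.

Definition monotonically_modular (f g : boolfun) : Prop :=
  exists l z, mmodular_wit f g l z.

(* f[g/w] := w f_{g/1} \/ ~w f_{g/0}, with f_{g/c} := l_{z/c} for a witness (l,z) *)
Definition gsubst (l : boolfun) (z : X) (w : X) : boolfun :=
  fun u => (u w && cof l z true u) || (~~ u w && cof l z false u).

Variable R : realFieldType.

Definition game := {set X} -> R.
Definition cgm := boolfun -> game.

Definition pder (x : X) (v : game) : game :=
  fun S => v (x |: S) - v (S :\ x).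

Definition Bound_CG (tau : cgm) : Prop :=
  forall f x S, 0 <= pder x (tau f) S <= 1.
Definition Dum_CG (tau : cgm) : Prop :=
  forall f x, ~ dep f x -> forall S, pder x (tau f) S = 0.
Definition Dic_CG (tau : cgm) : Prop :=
  forall x S, pder x (tau (varf x)) S = 1 /\ pder x (tau (negf (varf x))) S = 1.
Definition Type_CG (tau : cgm) : Prop :=
  (forall (s : {perm X}) f S, tau f S = tau (permF s f) (s @: S)) /\
  (forall y f S, tau f S = tau (flipf f y) S).
Definition ModEC_CG (tau : cgm) : Prop :=
  forall (f h g l1 l2 : boolfun) (z1 z2 x : X),
    mmodular_wit f g l1 z1 -> mmodular_wit h g l2 z2 ->
    fle (cof l2 z2 true) (cof l1 z1 true) ->
    fle (cof l1 z1 false) (cof l2 z2 false) ->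
    dep g x ->
    forall S, pder x (tau h) S <= pder x (tau f) S.

Definition importance_inducing (tau : cgm) : Prop :=
  [/\ Bound_CG tau, Dum_CG tau, Dic_CG tau, Type_CG tau & ModEC_CG tau].

Definition weakly_chain_rule_decomposable (tau : cgm) : Prop :=
  forall (f g l : boolfun) (z x xg : X),
    mmodular_wit f g l z -> dep g x -> ~ dep f xg ->
    forall S, pder x (tau f) S = pder x (tau g) S * pder xg (tau (gsubst l z xg)) S.

Definition omega : cgm := fun f S =>
  if [exists u : assign, [forall w : assign, f (concat S u w)]] then 1 else 0.

End Defs.

(* Main.v *)
Require Import Defs.
From mathcomp Require Import all_boot all_order all_algebra all_fingroup.
From Stdlib Require Import Classical FunctionalExtensionality.
From mathcomp Require Import lra.
Set Implicit Arguments. Unset Strict Implicit. Unset Printing Implicit Defensive.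
Import Order.TTheory GRing.Theory Num.Theory.

Section Aux.
Variable X : finType.

Definition forces (S : {set X}) (f : boolfun X) : bool :=
  [exists u : assign X, [forall w : assign X, f (concat S u w)]].

Definition indep (f : boolfun X) (x : X) : Prop :=
  forall u, f (upd u x true) = f (upd u x false).

Lemma indepP f x : ~ dep f x -> indep f x.
Proof.
move=> H u; have E : cof f x true = cof f x false by apply: NNPP.
by have := congr1 (fun h => h u) E.
Qed.

Lemma dep_indep f x : dep f x -> ~ indep f x.
Proof. by move=> H I; apply: H; apply: functional_extensionality => u; apply: I. Qed.

Lemma upd_id (u : assign X) x : upd u x (u x) = u.
Proof. by apply/ffunP => y; rewrite ffunE; case: eqP => // ->. Qed.

Lemma indep_upd f x : indep f x -> forall u c, f (upd u x c) = f u.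
Proof.
move=> I u c; rewrite -{2}(upd_id u x).
by case: c; case: (u x) => //; rewrite I.
Qed.

Lemma only_dep (f : boolfun X) (A : {set X}) :
  (forall x, x \notin A -> indep f x) ->
  forall u v : assign X, (forall x, x \in A -> u x = v x) -> f u = f v.
Proof.
move=> I.
suff H : forall n (u v : assign X), #|[set x | u x != v x]| <= n ->
   (forall x, x \in A -> u x = v x) -> f u = f v.
  by move=> u v; apply: (H _ u v (leqnn _)).
elim=> [|n IH] u v.
  rewrite leqn0 cards_eq0 => /eqP E _.
  suff -> : u = v by [].
  apply/ffunP => x; case: (eqVneq (u x) (v x)) => // h.
  have : x \in [set x | u x != v x] by rewrite inE h.
  by rewrite E inE.
move=> Hn HA.
case: (set_0Vmem [set x | u x != v x]) => [E|[x Hx]].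
  suff -> : u = v by [].
  apply/ffunP => y; case: (eqVneq (u y) (v y)) => // h.
  have : y \in [set x | u x != v x] by rewrite inE h.
  by rewrite E inE.
have xA : x \notin A by apply/negP => /HA; move: Hx; rewrite inE => /eqP.
rewrite -(indep_upd (I x xA) u (v x)).
apply: IH.
  rewrite -ltnS; apply: leq_trans Hn.
  apply: proper_card; apply/properP; split.
    apply/subsetP => y; rewrite !inE /upd ffunE; case: (y =P x) => [->|_] //; by rewrite eqxx.
  by exists x => //; rewrite inE /upd ffunE eqxx eqxx.
by move=> y yA; rewrite /upd ffunE; case: (y =P x) => [->|_]; [|apply: HA].
Qed.

Lemma forces_mono (S T : {set X}) (f : boolfun X) : S \subset T -> forces S f -> forces T f.
Proof.
move=> ST /existsP [u /forallP H]; apply/existsP; exists u; apply/forallP => w.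
have := H (concat T u w).
congr f; apply/ffunP => x; rewrite !ffunE.
by case: ifP => // xS; rewrite (subsetP ST x xS).
Qed.

Lemma forces_fmono (S : {set X}) (f g : boolfun X) : (forall u, f u -> g u) -> forces S f -> forces S g.
Proof.
move=> fg /existsP [u /forallP H]; apply/existsP; exists u; apply/forallP => w.
exact: fg.
Qed.

Lemma forces_indepD (S : {set X}) (f : boolfun X) x : indep f x -> forces S f = forces (S :\ x) f.
Proof.
move=> I; apply/idP/idP; last by apply: forces_mono; apply: subD1set.
move=> /existsP [u /forallP H]; apply/existsP; exists u; apply/forallP => w.
rewrite -(indep_upd I (concat (S :\ x) u w) (concat S u w x)).
suff -> : upd (concat (S :\ x) u w) x (concat S u w x) = concat S u w by [].
apply/ffunP => y; rewrite /upd /concat !ffunE !inE.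
by case: (y =P x) => [->|_] //=; rewrite ffunE.
Qed.

Lemma forces_indepU (S : {set X}) (f : boolfun X) x : indep f x -> forces (x |: S) f = forces S f.
Proof.
move=> I; rewrite (@forces_indepD (x |: S) f x I) [RHS](@forces_indepD S f x I).
suff -> : (x |: S) :\ x = S :\ x by [].
by apply/setP => y; rewrite !inE; case: (y =P x).
Qed.


Lemma forces_ite (G : {set X}) (f g a b : boolfun X) (S : {set X}) :
  (forall u v : assign X, (forall x, x \in G -> u x = v x) -> g u = g v) ->
  (forall u v : assign X, (forall x, x \notin G -> u x = v x) -> a u = a v) ->
  (forall u v : assign X, (forall x, x \notin G -> u x = v x) -> b u = b v) ->
  (forall u, b u -> a u) ->
  (forall u, f u = g u && a u || ~~ g u && b u) ->
  forces S f = forces S b || forces S a && forces S g.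
Proof.
move=> Hg Ha Hb ba Hf; apply/idP/idP.
- move=> /existsP [u /forallP H].
  case Hall: [forall w, g (concat S u w)].
  + apply/orP; right; apply/andP; split; apply/existsP; exists u; apply/forallP => w.
      by have := H w; rewrite Hf (forallP Hall w) /= orbF.
    exact: (forallP Hall w).
  + move/negbT: Hall => /forallPn [w0 Hw0].
    apply/orP; left; apply/existsP; exists u; apply/forallP => w.
    set w2 := concat G w0 w.
    have g2 : g (concat S u w2) = false.
      rewrite (Hg _ (concat S u w0)); first exact: negbTE Hw0.
      by move=> x xG; rewrite /w2 /concat !ffunE; case: ifP => //; rewrite xG.
    have := H w2; rewrite Hf g2 /= => hb.
    rewrite -(Hb (concat S u w2)) //.
    by move=> x xG; rewrite /w2 /concat !ffunE; case: ifP => // _; rewrite (negbTE xG).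
- case/orP => [Fb|/andP[/existsP[ua /forallP Ha'] /existsP[ug /forallP Hg']]].
    by apply: forces_fmono Fb => u bu; rewrite Hf; case: (g u); rewrite /= ?orbF //; apply: ba.
  apply/existsP; exists (concat G ug ua); apply/forallP => w.
  have e1 : g (concat S (concat G ug ua) w) = g (concat S ug w).
    by apply: (Hg) => y yG; rewrite /concat !ffunE; case: ifP => //; rewrite yG.
  have e2 : a (concat S (concat G ug ua) w) = a (concat S ua w).
    by apply: (Ha) => y yG; rewrite /concat !ffunE; case: ifP => // _; rewrite (negbTE yG).
  by rewrite Hf e1 e2 Hg' Ha'.
Qed.

Definition depset (g : boolfun X) : {set X} :=
  [set x | [exists u, g (upd u x true) != g (upd u x false)]].

Lemma in_depset g x : x \in depset g <-> dep g x.
Proof.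
split.
  rewrite inE => /existsP [u Hu] E; move/eqP: Hu; apply.
  by have := congr1 (fun h => h u) E.
move=> H; rewrite inE; case E: [exists u, _] => //; exfalso.
apply: (dep_indep H) => u; apply/eqP.
by move/negbT/existsPn: E => /(_ u); rewrite negbK.
Qed.

Lemma g_only (g : boolfun X) :
  forall u v : assign X, (forall x, x \in depset g -> u x = v x) -> g u = g v.
Proof.
apply: only_dep => x xn; apply: indepP => H; move/negP: xn; apply.
by apply/in_depset.
Qed.

Lemma upd_upd_same (u : assign X) x b c : upd (upd u x b) x c = upd u x c.
Proof. by apply/ffunP => y; rewrite /upd !ffunE; case: (y =P x). Qed.

Lemma upd_comm (u : assign X) x y b c : x <> y -> upd (upd u x b) y c = upd (upd u y c) x b.
Proof.
move=> nxy; apply/ffunP => t; rewrite /upd !ffunE.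
by case: (t =P x) => [tx|tx]; case: (t =P y) => [ty|ty] //; exfalso; apply: nxy; rewrite -tx -ty.
Qed.

Lemma cof_indep l z c x : indep l x -> indep (cof l z c) x.
Proof.
move=> I u; rewrite /cof; case: (x =P z) => [->|nxz].
  by rewrite !upd_upd_same.
by rewrite !(@upd_comm _ x z) //; apply: I.
Qed.

Lemma l_only (g l : boolfun X) z c : (forall x, ~ (dep l x /\ dep g x)) ->
  forall u v : assign X, (forall x, x \notin depset g -> u x = v x) -> cof l z c u = cof l z c v.
Proof.
move=> D u v H; apply: (@only_dep (cof l z c) (~: depset g)) => x; rewrite inE ?negbK.
  by move=> /in_depset Hx; apply: cof_indep; apply: indepP => Hl; apply: (D x).
exact: H.
Qed.

Variable R : realFieldType.
Local Open Scope ring_scope.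

Lemma omegaE (f : boolfun X) S : omega R f S = if forces S f then 1 else 0.
Proof. by []. Qed.

Lemma pder_ite (G : {set X}) (f g a b : boolfun X) x (S : {set X}) :
  (forall u v : assign X, (forall x, x \in G -> u x = v x) -> g u = g v) ->
  (forall u v : assign X, (forall x, x \notin G -> u x = v x) -> a u = a v) ->
  (forall u v : assign X, (forall x, x \notin G -> u x = v x) -> b u = b v) ->
  (forall u, b u -> a u) ->
  (forall u, f u = g u && a u || ~~ g u && b u) ->
  indep a x -> indep b x ->
  pder x (omega R f) S =
    (if ~~ forces S b && forces S a then 1 else 0) * pder x (omega R g) S.
Proof.
move=> Hg Ha Hb ba Hf Ia Ib.
rewrite /pder !omegaE !(@forces_ite G f g a b _ Hg Ha Hb ba Hf).
rewrite (forces_indepU S Ia) (forces_indepU S Ib) -(forces_indepD S Ia) -(forces_indepD S Ib).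
case: (forces S b); case: (forces S a); case: (forces (x |: S) g); case: (forces (S :\ x) g);
  rewrite /= ?mul1r ?mul0r ?subrr ?subr0 ?sub0r //.
Qed.


Lemma pder_wit (f g l : boolfun X) z x (S : {set X}) : mmodular_wit f g l z -> dep g x ->
  pder x (omega R f) S =
   (if ~~ forces S (cof l z false) && forces S (cof l z true) then 1 else 0)
     * pder x (omega R g) S.
Proof.
case=> [[nc [D ->]] mono] Hx.
have Ix : forall c, indep (cof l z c) x.
  by move=> c; apply: cof_indep; apply: indepP => Hl; apply: (D x).
exact: (@pder_ite (depset g) (subst l z g) g (cof l z true) (cof l z false) x S
  (@g_only g) (@l_only g l z true D) (@l_only g l z false D) mono (fun u => erefl)
  (Ix true) (Ix false)).
Qed.

Lemma pder_bounds (f : boolfun X) x (S : {set X}) : 0 <= pder x (omega R f) S <= 1.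
Proof.
have sub : S :\ x \subset x |: S.
  by apply/subsetP => y; rewrite !inE => /andP[_ ->]; rewrite orbT.
have := @forces_mono _ _ f sub.
rewrite /pder !omegaE; case: (forces (x |: S) f); case: (forces (S :\ x) f) => //= H;
  rewrite ?subrr ?subr0 ?lexx ?ler01 //; by have := H isT.
Qed.

Lemma forces_var (x : X) (T : {set X}) : forces T (varf x) = (x \in T).
Proof.
apply/idP/idP.
  by move=> /existsP [u /forallP H]; have := H [ffun=> false]; rewrite /varf /concat !ffunE; case: (x \in T).
move=> xT; apply/existsP; exists [ffun=> true]; apply/forallP => w.
by rewrite /varf /concat !ffunE xT.
Qed.

Lemma forces_nvar (x : X) (T : {set X}) : forces T (negf (varf x)) = (x \in T).
Proof.
apply/idP/idP.
  by move=> /existsP [u /forallP H]; have := H [ffun=> true]; rewrite /negf /varf /concat !ffunE; case: (x \in T).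
move=> xT; apply/existsP; exists [ffun=> false]; apply/forallP => w.
by rewrite /negf /varf /concat !ffunE xT.
Qed.

Lemma xg_indep (f g l : boolfun X) z xg c : mmodular_wit f g l z -> ~ dep f xg -> indep (cof l z c) xg.
Proof.
case=> [[[u1 [u2 nc]] [D Hf]] mono] nd.
case: (boolP (xg \in depset g)) => [/in_depset Hg | Hg].
  by apply: cof_indep; apply: indepP => Hl; apply: (D xg).
case E: [forall u, cof l z c (upd u xg true) == cof l z c (upd u xg false)].
  by move=> u; apply/eqP; apply: (forallP E u).
exfalso; move/negbT/forallPn: E => [u0 Hu0].
have [v1 gv1] : exists v1, g v1 = c.
  case: (g u1 =P c) => [e|ne]; first by exists u1.
  exists u2; move: nc ne; destruct (g u1); destruct (g u2); destruct c; congruence.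
set u' := concat (depset g) v1 u0.
have key : forall b, f (upd u' xg b) = cof l z c (upd u0 xg b).
  move=> b.
  have gw : g (upd u' xg b) = c.
    rewrite -gv1; apply: g_only => y yG; rewrite /u' /upd /concat !ffunE yG.
    by case: (y =P xg) => // eq; move: Hg; rewrite -eq yG.
  have lw : forall c', cof l z c' (upd u' xg b) = cof l z c' (upd u0 xg b).
    move=> c'; apply: (@l_only g l z c' D) => y yG.
    by rewrite /u' /upd /concat !ffunE (negbTE yG).
  by rewrite Hf /subst gw !lw; case: c {gv1 Hu0 gw}; rewrite /= ?orbF.
move/eqP: Hu0; apply; rewrite -!key.
by apply: (indepP nd).
Qed.

Definition permA_inv (s : {perm X}) (u : assign X) : permA s (permA (s^-1)%g u) = u.
Proof. by apply/ffunP => x; rewrite /permA !ffunE invgK permKV. Qed.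

Lemma permA_invV (s : {perm X}) (u : assign X) : permA (s^-1)%g (permA s u) = u.
Proof. by apply/ffunP => x; rewrite /permA !ffunE invgK permK. Qed.

Lemma permA_concat (s : {perm X}) (S : {set X}) (u w : assign X) :
  permA (s^-1)%g (concat (s @: S) u w) = concat S (permA (s^-1)%g u) (permA (s^-1)%g w).
Proof.
apply/ffunP => x; rewrite /permA /concat !ffunE invgK mem_imset //.
exact: perm_inj.
Qed.

Lemma forces_perm (s : {perm X}) (f : boolfun X) (S : {set X}) : forces S f = forces (s @: S) (permF s f).
Proof.
apply/idP/idP.
  move=> /existsP [u /forallP H]; apply/existsP; exists (permA s u); apply/forallP => w.
  by rewrite /permF permA_concat permA_invV.
move=> /existsP [u /forallP H]; apply/existsP; exists (permA (s^-1)%g u); apply/forallP => w.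
by have := H (permA s w); rewrite /permF permA_concat permA_invV.
Qed.

Lemma flipK (y : X) (u : assign X) : flip y (flip y u) = u.
Proof. by apply/ffunP => x; rewrite /flip !ffunE; case: (x =P y) => // _; rewrite negbK. Qed.

Lemma flip_concat (y : X) (S : {set X}) (u w : assign X) : flip y (concat S u w) = concat S (flip y u) (flip y w).
Proof. by apply/ffunP => x; rewrite /flip /concat !ffunE; case: (x =P y); case: (x \in S). Qed.

Lemma forces_flip (y : X) (f : boolfun X) (S : {set X}) : forces S f = forces S (flipf f y).
Proof.
apply/idP/idP.
  move=> /existsP [u /forallP H]; apply/existsP; exists (flip y u); apply/forallP => w.
  by rewrite /flipf flip_concat flipK.
move=> /existsP [u /forallP H]; apply/existsP; exists (flip y u); apply/forallP => w.
by have := H (flip y w); rewrite /flipf flip_concat flipK.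
Qed.

End Aux.

Theorem mainTheorem12 (R : realFieldType) (X : finType) :
  weakly_chain_rule_decomposable (@omega X R) /\ importance_inducing (@omega X R).
Proof.
split.
  move=> f g l z x xg W Hx Hxg S.
  rewrite (pder_wit R S W Hx).
  have Ic : forall c, indep (cof l z c) xg by move=> c; exact: (xg_indep c W Hxg).
  have Hg : forall u v : assign X, (forall y, y \in [set xg] -> u y = v y) -> varf xg u = varf xg v.
    by move=> u v H; rewrite /varf; apply: H; rewrite inE.
  have Hl : forall c (u v : assign X), (forall y, y \notin [set xg] -> u y = v y) ->
      cof l z c u = cof l z c v.
    move=> c u v H; apply: (@only_dep _ _ (~: [set xg])) => y; rewrite !inE ?negbK.
      by move/eqP => ->; exact: Ic.
    by move=> hy; apply: H; rewrite inE.
  have mono : forall u, cof l z false u -> cof l z true u by case: W.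
  rewrite (@pder_ite _ R [set xg] (gsubst l z xg) (varf xg) (cof l z true) (cof l z false) xg S
    Hg (Hl true) (Hl false) mono (fun u => erefl) (Ic true) (Ic false)).
  rewrite [pder xg _ _]/pder !omegaE !forces_var setU11 setD11 subr0 mulr1 mulrC //.
split.
- by move=> f x S; apply: pder_bounds.
- move=> f x nd S; have I := indepP nd.
  by rewrite /pder !omegaE (forces_indepU S I) -(forces_indepD S I) subrr.
- by move=> x S; rewrite /pder !omegaE !forces_var !forces_nvar setU11 setD11 subr0.
- split.
    by move=> s f S; rewrite !omegaE -forces_perm.
  by move=> y f S; rewrite !omegaE -forces_flip.
- move=> f h g l1 l2 z1 z2 x W1 W2 le1 le0 Hx S.
  rewrite (pder_wit R S W1 Hx) (pder_wit R S W2 Hx).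
  have P0 := pder_bounds R g x S; case/andP: P0 => P0 _.
  apply: ler_wpM2r => //.
  have i1 := forces_fmono (S := S) le1; have i0 := forces_fmono (S := S) le0.
  move: i1 i0.
  case: (forces S (cof l1 z1 true)); case: (forces S (cof l1 z1 false));
  case: (forces S (cof l2 z2 true)); case: (forces S (cof l2 z2 false)) => //= H1 H0;
  rewrite ?lexx ?ler01 //; (try by have := H1 isT); by have := H0 isT.
Qed.
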